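(* For every integer $m\ge4$, \[ \sum_{n=1}^{\infty}\frac{h_n^{(3)}}{n^{m}}=\sum_{n=1}^{\infty}h_n^{(2)}\zeta(m,n)=\tfrac12\zeta_H(m-2)+\tfrac32\zeta_H(m-1)+\zeta_H(m)-\tfrac54\zeta(m-1)-\tfrac34\zeta(m-2). \]
   Context: Hyperharmonic numbers: $h_n^{(0)}=1/n$ for $n\ge1$, and for $r\ge1$, $h_n^{(r)}=\sum_{j=1}^{n}h_j^{(r-1)}$. $H_n=\sum_{j=1}^n 1/j$. $\zeta$ is the Riemann zeta function, $\zeta(s,a)=\sum_{j=0}^\infty (j+a)^{-s}$ the Hurwitz zeta function, and $\zeta_H(s)=\sum_{n=1}^{\infty}H_n/n^{s}$ for integers $s\ge2$. *)

(* Defs.v *)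
From Stdlib Require Import Reals ClassicalEpsilon.
Open Scope R_scope.

Fixpoint sum1 (f : nat -> R) (n : nat) : R :=
  match n with
  | O => 0
  | S k => sum1 f k + f (S k)
  end.

(* hyperharmonic numbers h_n^{(r)} (only meaningful for n >= 1) *)
Fixpoint hyperharmonic (r n : nat) : R :=
  match r with
  | O => / INR n
  | S r' => sum1 (hyperharmonic r') n
  end.

Definition harmonic (n : nat) : R := sum1 (fun j => / INR j) n.

(* value of a series sum_{k>=0} u k (chosen classically; meaningful when it converges) *)
Definition series_sum (u : nat -> R) : R :=
  epsilon (inhabits 0) (fun l => infinite_sum u l).

Definition zeta (s : nat) : R :=
  series_sum (fun k => / (INR (S k)) ^ s).

Definition hurwitz_zeta (s : nat) (a : R) : R :=
  series_sum (fun j => / (INR j + a) ^ s).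

Definition zetaH (s : nat) : R :=
  series_sum (fun k => harmonic (S k) / (INR (S k)) ^ s).

(* Main.v *)
Require Import Defs.
From Stdlib Require Import Reals Lra Lia Psatz ClassicalEpsilon.
Open Scope R_scope.

Lemma IS_cv u l : infinite_sum u l <-> Un_cv (sum_f_R0 u) l.
Proof. tauto. Qed.

Lemma IS_ext u v l : (forall k, u k = v k) -> infinite_sum u l -> infinite_sum v l.
Proof.
  intros H Hu eps He; destruct (Hu eps He) as [N HN]; exists N; intros n Hn.
  rewrite <- (sum_eq u v n) by (intros; apply H). now apply HN.
Qed.

Lemma IS_plus u v a b : infinite_sum u a -> infinite_sum v b ->
  infinite_sum (fun k => u k + v k) (a + b).
Proof.
  intros Hu Hv. apply IS_cv.
  apply (Un_cv_ext (fun n => sum_f_R0 u n + sum_f_R0 v n)).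
  - intros; now rewrite sum_plus.
  - now apply CV_plus.
Qed.

Lemma IS_scal c u a : infinite_sum u a -> infinite_sum (fun k => c * u k) (c * a).
Proof.
  intros Hu. apply IS_cv.
  apply (Un_cv_ext (fun n => c * sum_f_R0 u n)).
  - intros; rewrite scal_sum; apply sum_eq; intros; ring.
  - apply (CV_mult (fun _ => c)). intros e He; exists 0%nat; intros; unfold Rdist.
    rewrite Rminus_diag, Rabs_R0; lra. exact Hu.
Qed.

Lemma IS_le u v a b : (forall k, u k <= v k) -> infinite_sum u a -> infinite_sum v b -> a <= b.
Proof.
  intros H Hu Hv. apply (Rle_cv_lim (Un:=sum_f_R0 u) (Vn:=sum_f_R0 v)); auto;
  intros; apply sum_Rle; auto.
Qed.

Lemma IS_zero : infinite_sum (fun _ => 0) 0.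
Proof.
  intros e He; exists 0%nat; intros n _; unfold Rdist.
  rewrite sum_cte, Rmult_0_l, Rminus_diag, Rabs_R0; lra.
Qed.

Lemma IS_nonneg u a : (forall k, 0 <= u k) -> infinite_sum u a -> 0 <= a.
Proof. intros H Hu; apply (IS_le _ _ _ _ H IS_zero Hu). Qed.

Lemma IS_bounded u B : (forall k, 0 <= u k) -> (forall n, sum_f_R0 u n <= B) ->
  exists l, infinite_sum u l.
Proof.
  intros H HB. destruct (growing_cv (sum_f_R0 u)) as [l Hl].
  - intros n; simpl; specialize (H (S n)); lra.
  - exists B; intros x [i ->]; apply HB.
  - now exists l.
Qed.

Fixpoint psum (u : nat -> R) (n : nat) : R :=
  match n with O => 0 | S k => psum u k + u k end.

Lemma sum_psum u n : sum_f_R0 u n = psum u (S n).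
Proof. induction n; simpl in *; [lra | rewrite IHn; reflexivity]. Qed.

Lemma IS_shift1 u l : infinite_sum u l -> infinite_sum (fun j => u (S j)) (l - u 0%nat).
Proof.
  intros Hu eps He; destruct (Hu eps He) as [N HN]; exists N; intros n Hn.
  assert (E : sum_f_R0 (fun j => u (S j)) n = sum_f_R0 u (S n) - u 0%nat).
  { clear Hn; induction n; simpl in *. lra. rewrite IHn. simpl. lra. }
  rewrite E; unfold Rdist. replace (sum_f_R0 u (S n) - u 0%nat - (l - u 0%nat))
    with (sum_f_R0 u (S n) - l) by ring. apply HN; lia.
Qed.

Lemma IS_shift u l k : infinite_sum u l -> infinite_sum (fun j => u (j + k)%nat) (l - psum u k).
Proof.
  intros Hu; induction k.
  - simpl. replace (l - 0) with l by ring. apply (IS_ext u); auto.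
  - apply IS_shift1 in IHk. simpl.
    replace (l - (psum u k + u k)) with (l - psum u k - u (0 + k)%nat) by (simpl; ring).
    apply (IS_ext _ _ _ (fun j => f_equal u (eq_sym (Nat.add_succ_r j k)))); auto.
Qed.

Lemma hh_succ r n : hyperharmonic (S r) (S n) = hyperharmonic (S r) n + hyperharmonic r (S n).
Proof. reflexivity. Qed.

Lemma hh_nonneg r n : 0 <= hyperharmonic r n.
Proof.
  revert n; induction r; intros n.
  - simpl. destruct n. rewrite INR_0, Rinv_0; lra.
    left; apply Rinv_0_lt_compat, lt_0_INR; lia.
  - induction n. simpl; lra. rewrite hh_succ. specialize (IHr (S n)); lra.
Qed.

Lemma harm_S n : harmonic (S n) = harmonic n + / INR (S n).
Proof. reflexivity. Qed.

Lemma harm_nonneg n : 0 <= harmonic n.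
Proof. apply (hh_nonneg 1). Qed.

Lemma harm_ge1 n : 1 <= harmonic (S n).
Proof.
  induction n. unfold harmonic; simpl; lra.
  rewrite harm_S. assert (0 <= / INR (S (S n))) by (left; apply Rinv_0_lt_compat, lt_0_INR; lia). lra.
Qed.

Lemma h2_closed n : hyperharmonic 2 n = (INR n + 1) * harmonic n - INR n.
Proof.
  induction n. unfold harmonic; simpl; lra.
  rewrite hh_succ, IHn. change (hyperharmonic 1 (S n)) with (harmonic (S n)).
  rewrite harm_S. assert (INR (S n) <> 0) by (apply not_0_INR; lia).
  rewrite S_INR in *. field. auto.
Qed.

Lemma h3_closed n : hyperharmonic 3 n =
  (INR n ^ 2 + 3 * INR n + 2) / 2 * harmonic n - (3 * INR n ^ 2 + 5 * INR n) / 4.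
Proof.
  induction n. unfold harmonic; simpl; lra.
  rewrite hh_succ, IHn, h2_closed, harm_S.
  assert (INR (S n) <> 0) by (apply not_0_INR; lia).
  rewrite S_INR in *. field. auto.
Qed.

Lemma h3_mono n k : hyperharmonic 3 n <= hyperharmonic 3 (k + n).
Proof.
  induction k. simpl; lra. simpl plus. rewrite hh_succ. pose proof (hh_nonneg 2 (S (k + n))). lra.
Qed.

Lemma E1gen h x : 2 <= x -> (h - / x + 1) / (x - 1) - (h + 1) / x = h / (x * (x - 1)).
Proof. intros. field. lra. Qed.

Definition g2 k := harmonic (S k) / INR (S k) ^ 2.

Lemma g2_bound N : sum_f_R0 g2 N + (harmonic (S N) + 1) / INR (S N) <= 3.
Proof.
  induction N.
  - unfold g2, harmonic; simpl. lra.
  - simpl sum_f_R0.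
    set (x := INR (S (S N))). assert (Hx : 2 <= x) by (unfold x; rewrite !S_INR; pose proof (pos_INR N); lra).
    assert (Ey : INR (S N) = x - 1) by (unfold x; rewrite (S_INR (S N)); ring).
    set (h := harmonic (S (S N))).
    assert (Eh : harmonic (S N) = h - / x) by (unfold h, x; rewrite (harm_S (S N)); ring).
    rewrite Ey, Eh in IHN.
    assert (Hh : 0 <= h) by apply harm_nonneg.
    assert (E1 : (h - / x + 1) / (x - 1) - (h + 1) / x = h / (x * (x - 1))) by (apply E1gen; auto).
    assert (E2 : h / x ^ 2 <= h / (x * (x - 1))).
    { unfold Rdiv. apply Rmult_le_compat_l; auto. apply Rinv_le_contravar. nra. nra. }
    unfold g2 at 2. fold x h. lra.
Qed.

Lemma series_sum_spec u : (exists l, infinite_sum u l) -> infinite_sum u (series_sum u).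
Proof. intros H. unfold series_sum. now apply epsilon_spec. Qed.

Lemma g2_psum N : sum_f_R0 g2 N <= 3.
Proof.
  pose proof (g2_bound N). assert (0 <= (harmonic (S N) + 1) / INR (S N)).
  { pose proof (harm_nonneg (S N)). unfold Rdiv; apply Rmult_le_pos. lra. left; apply Rinv_0_lt_compat, lt_0_INR; lia. }
  lra.
Qed.

Lemma inv_pow_le k s : (2 <= s)%nat -> / INR (S k) ^ s <= / INR (S k) ^ 2.
Proof.
  intros Hs. assert (1 <= INR (S k)) by (rewrite S_INR; pose proof (pos_INR k); lra).
  apply Rinv_le_contravar. apply pow_lt; lra. apply Rle_pow; auto.
Qed.

Lemma inv_pow_pos k s : 0 < / INR (S k) ^ s.
Proof. apply Rinv_0_lt_compat, pow_lt, lt_0_INR; lia. Qed.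

Lemma zeta_ex s : (2 <= s)%nat -> infinite_sum (fun k => / INR (S k) ^ s) (zeta s).
Proof.
  intros Hs. apply series_sum_spec. apply (IS_bounded _ 3).
  - intros k; left; apply inv_pow_pos.
  - intros n. eapply Rle_trans; [| apply (g2_psum n)]. apply sum_Rle. intros k _.
    unfold g2, Rdiv. pose proof (harm_ge1 k). pose proof (inv_pow_pos k 2).
    pose proof (inv_pow_le k s Hs). nra.
Qed.

Lemma zetaH_ex s : (2 <= s)%nat -> infinite_sum (fun k => harmonic (S k) / INR (S k) ^ s) (zetaH s).
Proof.
  intros Hs. apply series_sum_spec. apply (IS_bounded _ 3).
  - intros k. pose proof (harm_ge1 k). pose proof (inv_pow_pos k s). unfold Rdiv; nra.
  - intros n. eapply Rle_trans; [| apply (g2_psum n)]. apply sum_Rle. intros k _.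
    unfold g2, Rdiv. pose proof (harm_ge1 k). pose proof (inv_pow_pos k 2).
    pose proof (inv_pow_le k s Hs). nra.
Qed.

Lemma IS_eqv u a b : infinite_sum u a -> a = b -> infinite_sum u b.
Proof. intros H <-; exact H. Qed.

Lemma part1 p :
  infinite_sum (fun k => hyperharmonic 3 (S k) / INR (S k) ^ (S (S (S (S p)))))
    (/ 2 * zetaH (S (S p)) + 3 / 2 * zetaH (S (S (S p))) + zetaH (S (S (S (S p))))
     - 5 / 4 * zeta (S (S (S p))) - 3 / 4 * zeta (S (S p))).
Proof.
  eapply IS_eqv.
  - eapply IS_ext; [| apply IS_plus; [apply IS_plus; [apply IS_plus; [apply IS_plus|]|]|]].
    6: apply (IS_scal (-(3/4))), (zeta_ex (S (S p))); lia.
    5: apply (IS_scal (-(5/4))), (zeta_ex (S (S (S p)))); lia.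
    4: apply (zetaH_ex (S (S (S (S p))))); lia.
    3: apply (IS_scal (3/2)), (zetaH_ex (S (S (S p)))); lia.
    2: apply (IS_scal (/2)), (zetaH_ex (S (S p))); lia.
    intros k. cbv beta. rewrite h3_closed. cbn [pow].
    assert (INR (S k) <> 0) by (apply not_0_INR; lia).
    assert (INR (S k) ^ p <> 0) by (apply pow_nonzero; auto).
    field. auto.
  - ring.
Qed.

Lemma hur_eq m k : (2 <= m)%nat ->
  hurwitz_zeta m (INR (S k)) = zeta m - psum (fun i => / INR (S i) ^ m) k.
Proof.
  intros hm.
  assert (H : infinite_sum (fun j => / (INR j + INR (S k)) ^ m) (zeta m - psum (fun i => / INR (S i) ^ m) k)).
  { eapply IS_ext; [| apply (IS_shift _ _ k (zeta_ex m hm))].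
    intros j; cbv beta. rewrite <- plus_INR. do 3 f_equal. lia. }
  unfold hurwitz_zeta. symmetry. apply (uniqueness_sum _ _ _ H).
  apply series_sum_spec. eauto.
Qed.

Lemma by_parts (z : nat -> R) Z N :
  sum_f_R0 (fun k => hyperharmonic 2 (S k) * (Z - psum z k)) N =
  sum_f_R0 (fun k => hyperharmonic 3 (S k) * z k) N + hyperharmonic 3 (S N) * (Z - psum z (S N)).
Proof.
  induction N.
  - cbn [sum_f_R0 psum]. rewrite (hh_succ 2 0). replace (hyperharmonic 3 0) with 0 by reflexivity. ring.
  - cbn [sum_f_R0]. rewrite IHN. cbn [psum]. rewrite (hh_succ 2 (S N)). ring.
Qed.

Lemma part2 m S1 : (2 <= m)%nat ->
  infinite_sum (fun k => hyperharmonic 3 (S k) / INR (S k) ^ m) S1 ->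
  infinite_sum (fun k => hyperharmonic 2 (S k) * hurwitz_zeta m (INR (S k))) S1.
Proof.
  intros hm H1.
  set (z := fun i => / INR (S i) ^ m).
  set (Z := zeta m).
  set (f1 := fun k => hyperharmonic 3 (S k) * z k).
  assert (Hf1 : infinite_sum f1 S1) by (eapply IS_ext; [| exact H1]; reflexivity).
  assert (HZ : infinite_sum z Z) by apply (zeta_ex m hm).
  assert (Hz : forall i, 0 <= z i) by (intros; left; apply inv_pow_pos).
  apply (IS_ext (fun k => hyperharmonic 2 (S k) * (Z - psum z k))).
  { intros k. rewrite hur_eq by auto. reflexivity. }
  assert (Rnn : forall N, 0 <= hyperharmonic 3 (S N) * (Z - psum z (S N))).
  { intros N. apply Rmult_le_pos. apply hh_nonneg.
    apply (IS_nonneg _ _ (fun j => Hz (j + S N)%nat) (IS_shift _ _ (S N) HZ)). }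
  assert (Rup : forall N, hyperharmonic 3 (S N) * (Z - psum z (S N)) <= S1 - psum f1 (S N)).
  { intros N. apply (IS_le (fun j => hyperharmonic 3 (S N) * z (j + S N)%nat) (fun j => f1 (j + S N)%nat)).
    - intros j. unfold f1. apply Rmult_le_compat_r; auto. apply (h3_mono (S N) (S j)).
    - apply IS_scal, IS_shift, HZ.
    - apply IS_shift, Hf1. }
  intros eps He. destruct (Hf1 eps He) as [N0 HN0]. exists N0. intros n Hn.
  specialize (HN0 n Hn). unfold Rdist in *. rewrite by_parts.
  specialize (Rnn n). specialize (Rup n). rewrite <- (sum_psum f1) in Rup. change (fun k => hyperharmonic 3 (S k) * z k) with f1.
  apply Rabs_def2 in HN0. destruct HN0; apply Rabs_def1; lra.
Qed.

Theorem mainTheorem4 (m : nat) (hm : (4 <= m)%nat) :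
  let rhs := / 2 * zetaH (m - 2) + 3 / 2 * zetaH (m - 1) + zetaH m
             - 5 / 4 * zeta (m - 1) - 3 / 4 * zeta (m - 2) in
  infinite_sum (fun k => hyperharmonic 3 (S k) / (INR (S k)) ^ m) rhs /\
  infinite_sum (fun k => hyperharmonic 2 (S k) * hurwitz_zeta m (INR (S k))) rhs.
Proof.
  intros rhs.
  assert (H1 : infinite_sum (fun k => hyperharmonic 3 (S k) / (INR (S k)) ^ m) rhs).
  { destruct m as [|[|[|[|p]]]]; try lia. unfold rhs.
    replace (S (S (S (S p))) - 2)%nat with (S (S p)) by lia.
    replace (S (S (S (S p))) - 1)%nat with (S (S (S p))) by lia.
    apply part1. }
  split; auto. apply part2; auto. lia.
Qed.
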